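(* Let $L=\{a^nb^m : n,m\in\mathbb{N},\ m\ge n\}$ over the alphabet $\{a,b\}$. Then $L\in\mathrm{RH}_1$ and $L\notin\mathrm{RD}$, i.e. $L$ is recognised by some history-deterministic $1$-VASS under reachability acceptance but by no deterministic $k$-VASS (for any $k$) under reachability acceptance.
   Context: Fix a finite alphabet $\Sigma$. A $k$-dimensional vector addition system with states ($k$-VASS) is a tuple $(Q,q_0,F,\delta)$ where $Q$ is a finite set of states, $q_0\in Q$ is initial, $F\subseteq Q$ is the set of accepting states, and $\delta\subseteq Q\times\Sigma\times\mathbb{Z}^k\times Q$ is a finite set of transitions (no $\varepsilon$-transitions). A run on a word $w=a_1\cdots a_n$ is a sequence of transitions $(p_{i-1},a_i,d_i,p_i)$ with $p_0=q_0$ such that the counter vectors $v_0=\vec 0$, $v_i=v_{i-1}+d_i$ all lie in $\mathbb{N}^k$. Under reachability acceptance the run is accepting if $p_n\in F$ and $v_n=\vec 0$. The language is the set of words having an accepting run. A VASS is deterministic if for every state $q$ and letter $a$ there is at most one transition $(q,a,d,q')$. A VASS is history-deterministic if there is a resolver, i.e. a function $r$ mapping each finite sequence of transitions and each letter $a$ to a transition labelled $a$, such that for every word $w$ in the language, the sequence of transitions obtained by successively applying $r$ to the letters of $w$ is a run on $w$ (counters stay nonnegative) and is accepting. $\mathrm{RD}_k$ (resp. $\mathrm{RH}_k$) is the class of languages recognised by deterministic (resp. history-deterministic) $k$-VASS under reachability acceptance, and $\mathrm{RD}=\bigcup_{k\ge1}\mathrm{RD}_k$. *)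

(* Defs.v *)
From Stdlib Require Import List ZArith Arith.
Import ListNotations.
Open Scope Z_scope.

Inductive letter : Type := la | lb.

Definition letter_eq_dec (x y : letter) : {x = y} + {x <> y}.
Proof. decide equality. Defined.

(* A k-VASS over {a,b}: states are natural numbers (Q is the finite set of
   states occurring in q0, F, delta); delta is a finite list of transitions
   (p, a, d, q) with d in Z^k represented as a list of length k. *)
Record VASS (k : nat) : Type := mkVASS {
  q0 : nat;
  F : list nat;
  delta : list (nat * letter * list Z * nat);
  delta_dim : forall t, In t delta -> length (snd (fst t)) = k
}.
Arguments q0 {k}. Arguments F {k}. Arguments delta {k}.

Definition trans : Type := (nat * letter * list Z * nat)%type.
Definition t_src (t : trans) : nat := fst (fst (fst t)).
Definition t_lab (t : trans) : letter := snd (fst (fst t)).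
Definition t_upd (t : trans) : list Z := snd (fst t).
Definition t_tgt (t : trans) : nat := snd t.

Definition vadd (v d : list Z) : list Z := map (fun p => fst p + snd p) (combine v d).
Definition zero_vec (k : nat) : list Z := repeat 0 k.
Definition nonneg (v : list Z) : Prop := Forall (fun x => 0 <= x) v.

Inductive run_from {k} (V : VASS k) : nat -> list Z -> list letter -> list trans -> nat -> list Z -> Prop :=
| run_nil : forall p v, run_from V p v [] [] p v
| run_cons : forall p v a w t ts q v',
    In t (delta V) -> t_src t = p -> t_lab t = a ->
    nonneg (vadd v (t_upd t)) ->
    run_from V (t_tgt t) (vadd v (t_upd t)) w ts q v' ->
    run_from V p v (a :: w) (t :: ts) q v'.

Definition accepting_run {k} (V : VASS k) (w : list letter) (ts : list trans) : Prop :=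
  exists q, run_from V (q0 V) (zero_vec k) w ts q (zero_vec k) /\ In q (F V).

Definition lang {k} (V : VASS k) (w : list letter) : Prop :=
  exists ts, accepting_run V w ts.

Definition deterministic {k} (V : VASS k) : Prop :=
  forall t t', In t (delta V) -> In t' (delta V) ->
    t_src t = t_src t' -> t_lab t = t_lab t' -> t = t'.

Definition resolver_ok {k} (V : VASS k) (r : list trans -> letter -> trans) : Prop :=
  forall h a, In (r h a) (delta V) /\ t_lab (r h a) = a.

Fixpoint res_run (r : list trans -> letter -> trans) (h : list trans) (w : list letter) : list trans :=
  match w with
  | [] => []
  | a :: w' => let t := r h a in t :: res_run r (h ++ [t]) w'
  end.

Definition history_deterministic {k} (V : VASS k) : Prop :=
  exists r, resolver_ok V r /\
    forall w, lang V w -> accepting_run V w (res_run r [] w).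

Definition RD_k (k : nat) (L : list letter -> Prop) : Prop :=
  exists V : VASS k, deterministic V /\ forall w, lang V w <-> L w.
Definition RH_k (k : nat) (L : list letter -> Prop) : Prop :=
  exists V : VASS k, history_deterministic V /\ forall w, lang V w <-> L w.
Definition RD (L : list letter -> Prop) : Prop := exists k, (1 <= k)%nat /\ RD_k k L.

Definition L_ab (w : list letter) : Prop :=
  exists n m : nat, (n <= m)%nat /\ w = repeat la n ++ repeat lb m.

(* Main.v *)
Require Import Defs.
From Stdlib Require Import List ZArith Arith Lia ClassicalEpsilon Classical.
Import ListNotations.
Open Scope Z_scope.

Lemma run_app {k} (V : VASS k) : forall w1 w2 p v ts q v',
  run_from V p v (w1 ++ w2) ts q v' ->
  exists ts1 ts2 q1 v1, run_from V p v w1 ts1 q1 v1 /\ run_from V q1 v1 w2 ts2 q v'.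
Proof.
  induction w1 as [|a w1 IH]; intros w2 p v ts q v' H.
  - exists [], ts, p, v. split; [constructor|exact H].
  - simpl in H. inversion H as [|p0 v0 a0 w0 t ts0 q0' v0' Hin Hsrc Hlab Hnn Hrun]; subst.
    destruct (IH _ _ _ _ _ _ Hrun) as (ts1 & ts2 & q1 & v1 & H1 & H2).
    exists (t :: ts1), ts2, q1, v1. split; [econstructor; eauto | exact H2].
Qed.

Lemma run_det {k} (V : VASS k) : deterministic V -> forall p v w ts q v',
  run_from V p v w ts q v' ->
  forall ts' q2 v2, run_from V p v w ts' q2 v2 -> q = q2 /\ v' = v2.
Proof.
  intros Hd p v w ts q v' H; induction H; intros ts' q2 v2 Hr2; inversion Hr2; subst.
  - auto.
  - assert (t = t0) by (apply Hd; auto; congruence). subst. eauto.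
Qed.

Lemma run_len {k} (V : VASS k) : forall p v w ts q v',
  run_from V p v w ts q v' -> length v = k -> length v' = k.
Proof.
  intros p v w ts q v' H; induction H; intros Hl; auto.
  apply IHrun_from. unfold vadd. rewrite length_map, length_combine.
  pose proof (delta_dim _ V t H) as Hdd. unfold t_upd. lia.
Qed.

Lemma run_tgt {k} (V : VASS k) : forall p v w ts q v',
  run_from V p v w ts q v' -> w <> [] -> In q (map t_tgt (delta V)).
Proof.
  intros p v w ts q v' H; induction H; intros Hne.
  - congruence.
  - destruct w as [|b w].
    + inversion H3; subst. apply in_map. auto.
    + apply IHrun_from. discriminate.
Qed.

Lemma vadd_zero_id : forall u x, length u = length x ->
  vadd (zero_vec (length u)) u = zero_vec (length u) -> vadd x u = x.
Proof.
  induction u as [|a u IH]; intros x Hl H.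
  - destruct x; simpl in *; [reflexivity|discriminate].
  - destruct x as [|x0 x]; simpl in *; [discriminate|].
    unfold vadd, zero_vec in *. simpl in *. injection H as H1 H2.
    f_equal; [simpl; lia|]. apply IH; auto.
Qed.

Lemma php : forall s (f : nat -> nat), (forall j, (j <= s)%nat -> (f j < s)%nat) ->
  exists i j, (i < j <= s)%nat /\ f i = f j.
Proof.
  induction s as [|s IH]; intros f Hf.
  - specialize (Hf 0%nat (le_n 0)). lia.
  - destruct (classic (exists j, (j <= s)%nat /\ f j = f (S s))) as [[j [Hj Hfj]]|Hno].
    + exists j, (S s). split; [lia|auto].
    + set (g := fun j => if Nat.ltb (f j) (f (S s)) then f j else (f j - 1)%nat).
      assert (Hg : forall j, (j <= s)%nat -> (g j < s)%nat).
      { intros j Hj. unfold g. assert (f j <> f (S s)) by (intro; apply Hno; eauto).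
        pose proof (Hf j ltac:(lia)). pose proof (Hf (S s) ltac:(lia)).
        destruct (Nat.ltb_spec (f j) (f (S s))); lia. }
      destruct (IH g Hg) as (i & j & Hij & Heq). exists i, j. split; [lia|].
      assert (f i <> f (S s)) by (intro; apply Hno; exists i; split; [lia|auto]).
      assert (f j <> f (S s)) by (intro; apply Hno; exists j; split; [lia|auto]).
      unfold g in Heq.
      destruct (Nat.ltb_spec (f i) (f (S s))); destruct (Nat.ltb_spec (f j) (f (S s))); lia.
Qed.

Fixpoint idx (x : nat) (l : list nat) : nat :=
  match l with [] => 0%nat | y :: l' => if Nat.eqb x y then 0%nat else S (idx x l') end.

Lemma idx_lt : forall x l, In x l -> (idx x l < length l)%nat.
Proof.
  intros x l; induction l as [|y l IH]; simpl; intros H; [contradiction|].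
  destruct (Nat.eqb_spec x y); [lia|]. destruct H; [congruence|]. specialize (IH H); lia.
Qed.

Lemma idx_inj : forall x y l, In x l -> In y l -> idx x l = idx y l -> x = y.
Proof.
  intros x y l; induction l as [|z l IH]; simpl; intros Hx Hy H; [contradiction|].
  destruct (Nat.eqb_spec x z); destruct (Nat.eqb_spec y z); try congruence.
  destruct Hx; [congruence|]. destruct Hy; [congruence|]. apply IH; auto.
Qed.

Lemma word_inj : forall n m n' m', repeat la n ++ repeat lb m = repeat la n' ++ repeat lb m' ->
  n = n' /\ m = m'.
Proof.
  induction n as [|n IH]; intros m n' m' H; destruct n' as [|n']; simpl in H.
  - split; auto. apply (f_equal (@length _)) in H. rewrite !repeat_length in H. auto.
  - destruct m; simpl in H; discriminate.
  - destruct m'; simpl in H; discriminate.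
  - injection H as H. destruct (IH _ _ _ H). auto.
Qed.

Lemma L_ab_inv : forall n m, L_ab (repeat la n ++ repeat lb m) -> (n <= m)%nat.
Proof.
  intros n m [n' [m' [Hle H]]]. destruct (word_inj _ _ _ _ H). subst. auto.
Qed.

Lemma not_RD_k k : ~ RD_k k L_ab.
Proof.
  intros [V [Hd HL]].
  set (s := length (delta V)). set (n := S s).
  assert (Hacc : forall j, (n <= j)%nat -> exists ts q,
    run_from V (q0 V) (zero_vec k) (repeat la n ++ repeat lb j) ts q (zero_vec k) /\ In q (F V)).
  { intros j Hj. assert (L_ab (repeat la n ++ repeat lb j)) as HLw by (exists n, j; auto).
    apply HL in HLw. destruct HLw as [ts [q [Hr Hq]]]. eauto. }
  assert (Hex : forall j, exists c : nat * list Z, exists ts,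
    run_from V (q0 V) (zero_vec k) (repeat la n ++ repeat lb j) ts (fst c) (snd c)).
  { intros j. destruct (Hacc (j + n)%nat ltac:(lia)) as [ts [q [Hr _]]].
    rewrite repeat_app, app_assoc in Hr.
    destruct (run_app _ _ _ _ _ _ _ _ Hr) as (ts1 & ts2 & q1 & v1 & H1 & _).
    exists (q1, v1). eauto. }
  set (cf := fun j => proj1_sig (constructive_indefinite_description _ (Hex j))).
  assert (HP1 : forall j, exists ts,
    run_from V (q0 V) (zero_vec k) (repeat la n ++ repeat lb j) ts (fst (cf j)) (snd (cf j))).
  { intros j. exact (proj2_sig (constructive_indefinite_description _ (Hex j))). }
  clearbody cf.
  set (r := fun j => fst (cf j)). set (wv := fun j => snd (cf j)).
  assert (HP2 : forall j, (n <= j)%nat -> In (r j) (F V) /\ wv j = zero_vec k).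
  { intros j Hj. destruct (Hacc j Hj) as [ts [q [Hr Hq]]]. destruct (HP1 j) as [ts' H'].
    destruct (run_det _ Hd _ _ _ _ _ _ H' _ _ _ Hr). unfold r, wv. subst. auto. }
  assert (HP3 : forall j, exists t, In t (delta V) /\ t_src t = r j /\ t_lab t = lb /\
    r (S j) = t_tgt t /\ wv (S j) = vadd (wv j) (t_upd t)).
  { intros j. destruct (HP1 (S j)) as [ts H].
    replace (S j) with (j + 1)%nat in H by lia.
    rewrite repeat_app, app_assoc in H.
    destruct (run_app _ _ _ _ _ _ _ _ H) as (ts1 & ts2 & q1 & v1 & H1 & H2).
    destruct (HP1 j) as [ts' H'].
    destruct (run_det _ Hd _ _ _ _ _ _ H1 _ _ _ H'). subst.
    inversion H2 as [|p0 v0 a0 w0 t ts0 q0' v0' Hin Hsrc Hlab Hnn Hrun]; subst.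
    inversion Hrun; subst. exists t. unfold r, wv.
    replace (j + 1)%nat with (S j) by lia. repeat split; auto.
    all: rewrite <- Nat.add_1_r; auto. }
  assert (HP4 : forall j, In (r j) (map t_tgt (delta V))).
  { intros j. destruct (HP1 j) as [ts H]. eapply run_tgt; eauto. simpl. discriminate. }
  assert (Hlen : forall j, length (wv j) = k).
  { intros j. destruct (HP1 j) as [ts H]. eapply run_len; eauto. apply repeat_length. }
  destruct (php s (fun j => idx (r j) (map t_tgt (delta V)))) as (i & i' & Hii & Hri).
  { intros j _. unfold s. rewrite <- (length_map t_tgt). apply idx_lt. auto. }
  apply idx_inj in Hri; auto.
  assert (Hper : forall m, r (i + m)%nat = r (i' + m)%nat).
  { induction m as [|m IH]. { rewrite !Nat.add_0_r. auto. }
    rewrite !Nat.add_succ_r.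
    destruct (HP3 (i + m)%nat) as (t1 & A1 & B1 & C1 & D1 & _).
    destruct (HP3 (i' + m)%nat) as (t2 & A2 & B2 & C2 & D2 & _).
    assert (t1 = t2) by (apply Hd; auto; congruence). subst. congruence. }
  set (P := (i' - i)%nat).
  assert (Hper' : forall c m, r (i + m)%nat = r (i + m + c * P)%nat).
  { induction c as [|c IH]; intros m. { f_equal. lia. }
    rewrite (IH m). replace (i + m + S c * P)%nat with (i' + (m + c * P))%nat by (unfold P; nia).
    rewrite <- Hper. f_equal. lia. }
  assert (Hupd : forall j, (i <= j)%nat -> wv (S j) = wv j).
  { intros j Hj. set (J := (j + n * P)%nat).
    assert (HrJ : r j = r J).
    { replace j with (i + (j - i))%nat by lia. unfold J.
      replace (i + (j - i) + n * P)%nat with (i + (j - i) + n * P)%nat by lia.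
      rewrite (Hper' n (j - i)%nat). f_equal. lia. }
    assert (HJ : (n <= J)%nat) by (unfold J, P; nia).
    destruct (HP3 j) as (t1 & A1 & B1 & C1 & D1 & E1).
    destruct (HP3 J) as (t2 & A2 & B2 & C2 & D2 & E2).
    assert (t1 = t2) by (apply Hd; auto; congruence). subst t2.
    rewrite E1. pose proof (delta_dim _ V t1 A1) as Hd1. change (length (t_upd t1) = k) in Hd1.
    apply vadd_zero_id.
    - rewrite Hd1, Hlen. auto.
    - rewrite Hd1. rewrite (proj2 (HP2 J HJ)) in E2. rewrite (proj2 (HP2 (S J) ltac:(lia))) in E2.
      auto. }
  assert (Hconst : forall m, wv (i + m)%nat = wv i).
  { induction m as [|m IH]. { rewrite Nat.add_0_r; auto. }
    rewrite Nat.add_succ_r, Hupd by lia. auto. }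
  assert (Hw : wv i' = zero_vec k).
  { replace i' with (i + (i' - i))%nat by lia. rewrite Hconst.
    rewrite <- (Hconst (n - i)%nat). replace (i + (n - i))%nat with n by lia.
    apply HP2. lia. }
  assert (HF : In (r i') (F V)).
  { replace i' with (i + (i' - i))%nat by lia. rewrite (Hper' n).
    apply HP2. unfold P. nia. }
  destruct (HP1 i') as [ts H].
  assert (lang V (repeat la n ++ repeat lb i')) as Hl.
  { exists ts, (r i'). split; auto. fold (wv i') in H. rewrite Hw in H. exact H. }
  apply HL, L_ab_inv in Hl. lia.
Qed.

Lemma not_RD : ~ RD L_ab.
Proof. intros [k [_ H]]. exact (not_RD_k k H). Qed.

Definition tA : trans := (0%nat, la, [1], 0%nat).
Definition tB0d : trans := (0%nat, lb, [-1], 1%nat).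
Definition tB0k : trans := (0%nat, lb, [0], 1%nat).
Definition tB1d : trans := (1%nat, lb, [-1], 1%nat).
Definition tB1k : trans := (1%nat, lb, [0], 1%nat).
Definition dl : list trans := [tA; tB0d; tB0k; tB1d; tB1k].

Lemma dl_dim : forall t, In t dl -> length (snd (fst t)) = 1%nat.
Proof. intros t H. simpl in H. intuition subst; reflexivity. Qed.

Definition V1 : VASS 1 := mkVASS 1 0%nat [0%nat; 1%nat] dl dl_dim.

Definition cur_state (h : list trans) : nat := last (map t_tgt h) 0%nat.
Definition cur_cnt (h : list trans) : Z := fold_right (fun t acc => hd 0 (t_upd t) + acc) 0 h.

Definition res (h : list trans) (a : letter) : trans :=
  match a with
  | la => tA
  | lb => if Nat.eqb (cur_state h) 0 then (if 0 <? cur_cnt h then tB0d else tB0k)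
          else (if 0 <? cur_cnt h then tB1d else tB1k)
  end.

Lemma cur_state_app : forall h t, cur_state (h ++ [t]) = t_tgt t.
Proof. intros. unfold cur_state. rewrite map_app. simpl. apply last_last. Qed.

Lemma cur_cnt_app : forall h t, cur_cnt (h ++ [t]) = cur_cnt h + hd 0 (t_upd t).
Proof. induction h; intros; simpl; [lia|]. unfold cur_cnt in *. rewrite IHh. lia. Qed.

Lemma res_ok : resolver_ok V1 res.
Proof.
  intros h a. destruct a; simpl; [split; auto|].
  destruct (Nat.eqb _ _); destruct (0 <? _); simpl; auto 10.
Qed.

Lemma phaseB : forall m h c, 0 <= c -> cur_cnt h = c ->
  (cur_state h = 0%nat \/ cur_state h = 1%nat) -> c <= Z.of_nat m ->
  exists q, run_from V1 (cur_state h) [c] (repeat lb m) (res_run res h (repeat lb m)) q [0]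
    /\ In q [0%nat; 1%nat].
Proof.
  induction m as [|m IH]; intros h c Hc Hcnt Hst Hm.
  - simpl. exists (cur_state h). replace c with 0 by lia.
    split; [constructor|]. simpl. lia.
  - cbn [repeat res_run].
    destruct (0 <? c) eqn:Hlt.
    + apply Z.ltb_lt in Hlt.
      set (t := res h lb).
      assert (Ht : t = if Nat.eqb (cur_state h) 0 then tB0d else tB1d).
      { unfold t, res. rewrite Hcnt. destruct (0 <? c) eqn:E; [|lia].
        destruct (Nat.eqb _ _); auto. }
      destruct (IH (h ++ [t]) (c - 1)) as [q [Hr Hq]]; try lia.
      { rewrite cur_cnt_app, Hcnt, Ht. destruct (Nat.eqb _ _); simpl; lia. }
      { rewrite cur_state_app, Ht. destruct (Nat.eqb _ _); simpl; auto. }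
      exists q. split; auto.
      rewrite cur_state_app in Hr.
      apply run_cons; auto.
      * rewrite Ht. destruct (Nat.eqb_spec (cur_state h) 0); simpl; auto 10.
      * rewrite Ht. destruct (Nat.eqb_spec (cur_state h) 0); cbv [t_src tB0d tB1d tB0k tB1k fst]; lia.
      * rewrite Ht. destruct (Nat.eqb _ _); reflexivity.
      * rewrite Ht. destruct (Nat.eqb _ _); repeat constructor; simpl; lia.
      * replace (vadd [c] (t_upd t)) with [c - 1]; auto.
        rewrite Ht. destruct (Nat.eqb _ _); unfold vadd; simpl; f_equal; lia.
    + assert (Hc0 : c = 0) by (apply Z.ltb_ge in Hlt; lia). rewrite Hc0 in *. clear Hlt.
      set (t := res h lb).
      assert (Ht : t = if Nat.eqb (cur_state h) 0 then tB0k else tB1k).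
      { unfold t, res. rewrite Hcnt. simpl. destruct (Nat.eqb _ _); auto. }
      destruct (IH (h ++ [t]) 0) as [q [Hr Hq]]; try lia.
      { rewrite cur_cnt_app, Hcnt, Ht. destruct (Nat.eqb _ _); simpl; lia. }
      { rewrite cur_state_app, Ht. destruct (Nat.eqb _ _); simpl; auto. }
      exists q. split; auto.
      rewrite cur_state_app in Hr.
      apply run_cons; auto.
      * rewrite Ht. destruct (Nat.eqb_spec (cur_state h) 0); simpl; auto 10.
      * rewrite Ht. destruct (Nat.eqb_spec (cur_state h) 0); cbv [t_src tB0d tB1d tB0k tB1k fst]; lia.
      * rewrite Ht. destruct (Nat.eqb _ _); reflexivity.
      * rewrite Ht. destruct (Nat.eqb _ _); repeat constructor; simpl; lia.
      * replace (vadd [0] (t_upd t)) with [0]; auto.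
        rewrite Ht. destruct (Nat.eqb _ _); unfold vadd; simpl; f_equal.
Qed.

Lemma phaseA : forall n h c, cur_state h = 0%nat -> cur_cnt h = c -> 0 <= c ->
  forall rest q v',
  run_from V1 0 [c + Z.of_nat n] rest (res_run res (h ++ repeat tA n) rest) q v' ->
  run_from V1 0 [c] (repeat la n ++ rest) (res_run res h (repeat la n ++ rest)) q v'.
Proof.
  induction n as [|n IH]; intros h c Hs Hc Hc0 rest q v' H.
  - simpl in *. rewrite app_nil_r in H. replace (c + 0) with c in H by lia. exact H.
  - simpl. apply run_cons; auto.
    + simpl. auto.
    + repeat constructor. simpl. lia.
    + change (vadd [c] (t_upd tA)) with [c + 1]. change (t_tgt tA) with 0%nat.
      apply (IH (h ++ [tA]) (c + 1)).
      * apply cur_state_app.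
      * rewrite cur_cnt_app, Hc. reflexivity.
      * lia.
      * rewrite <- app_assoc. simpl. replace (c + 1 + Z.of_nat n) with (c + Z.of_nat (S n)) by lia.
        exact H.
Qed.

Lemma cnt_rep : forall n, cur_cnt (repeat tA n) = Z.of_nat n.
Proof. induction n; [reflexivity|]. unfold cur_cnt in *. cbn [repeat fold_right]. rewrite IHn. unfold tA, t_upd. cbn [fst snd hd]. lia. Qed.

Lemma state_rep : forall n, cur_state (repeat tA n) = 0%nat.
Proof. induction n; [reflexivity|]. unfold cur_state in *. simpl. destruct n; auto. Qed.

Lemma res_accepts : forall w, L_ab w -> accepting_run V1 w (res_run res [] w).
Proof.
  intros w [n [m [Hle ->]]].
  destruct (phaseB m (repeat tA n) (Z.of_nat n)) as [q [Hr Hq]]; try lia.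
  { apply cnt_rep. } { rewrite state_rep; auto. }
  exists q. split; [|exact Hq].
  simpl. unfold zero_vec. simpl.
  apply (phaseA n [] 0); auto; [lia|].
  simpl. rewrite state_rep in Hr. exact Hr.
Qed.

Lemma inv1 : forall p v w ts q v', run_from V1 p v w ts q v' -> p = 1%nat ->
  forall c, v = [c] -> exists m, w = repeat lb m /\ exists c', v' = [c'] /\ c - Z.of_nat m <= c'.
Proof.
  intros p v w ts q v' H; induction H; intros Hp c Hv; subst.
  - exists 0%nat. split; auto. exists c. split; auto. lia.
  - simpl in H. destruct H as [<-|[<-|[<-|[<-|[<-|[]]]]]]; try discriminate;
      simpl in *; subst.
    + destruct (IHrun_from eq_refl (c + -1)) as [m [-> [c' [-> Hc]]]]; [reflexivity|].
      exists (S m). split; auto. exists c'. split; auto. lia.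
    + destruct (IHrun_from eq_refl (c + 0)) as [m [-> [c' [-> Hc]]]]; [reflexivity|].
      exists (S m). split; auto. exists c'. split; auto. lia.
Qed.

Lemma inv0 : forall p v w ts q v', run_from V1 p v w ts q v' -> p = 0%nat ->
  forall c, v = [c] -> exists n m c', w = repeat la n ++ repeat lb m /\ v' = [c'] /\
    c + Z.of_nat n - Z.of_nat m <= c'.
Proof.
  intros p v w ts q v' H; induction H; intros Hp c Hv; subst.
  - exists 0%nat, 0%nat, c. repeat split; auto. lia.
  - simpl in H. destruct H as [<-|[<-|[<-|[<-|[<-|[]]]]]]; try discriminate;
      simpl in *; subst.
    + destruct (IHrun_from eq_refl (c + 1)) as [n [m [c' [-> [-> Hc]]]]]; [reflexivity|].
      exists (S n), m, c'. repeat split; auto. lia.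
    + destruct (inv1 _ _ _ _ _ _ H3 eq_refl (c + -1) eq_refl) as [m [-> [c' [-> Hc]]]].
      exists 0%nat, (S m), c'. repeat split; auto. lia.
    + destruct (inv1 _ _ _ _ _ _ H3 eq_refl (c + 0) eq_refl) as [m [-> [c' [-> Hc]]]].
      exists 0%nat, (S m), c'. repeat split; auto. lia.
Qed.

Lemma lang_V1 : forall w, lang V1 w <-> L_ab w.
Proof.
  intros w; split.
  - intros [ts [q [Hr _]]].
    destruct (inv0 _ _ _ _ _ _ Hr eq_refl 0 eq_refl) as [n [m [c' [-> [Hv Hc]]]]].
    injection Hv as <-. exists n, m. split; auto. lia.
  - intros H. exists (res_run res [] w). apply res_accepts; auto.
Qed.

Theorem mainTheorem3 : RH_k 1 L_ab /\ ~ RD L_ab.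
Proof.
  split; [|exact not_RD].
  exists V1. split; [|exact lang_V1].
  exists res. split; [exact res_ok|].
  intros w Hw. apply res_accepts, lang_V1, Hw.
Qed.
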